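(* Let $\{\mathcal{T}_n\}_{n\ge 2}$ be the two-type CMRT with parameters $p\in(0,1]$, $q\in[0,1]$, and for $k\ge 0$ let $N_k(n)$ be the number of vertices of out-degree $k$ in $\mathcal{T}_n$. Then for each fixed $k\ge 0$, $N_k(n)/n\to p_k$ in probability as $n\to\infty$, where $$p_k=\frac{p}{1+r_A^*}\left(\frac{r_A^*}{1+r_A^*}\right)^k+\frac{1-p}{1+r_B^*}\left(\frac{r_B^*}{1+r_B^*}\right)^k,\qquad r_A^*=q+\frac{(1-p)(1-q)}{p},\quad r_B^*=\frac{p(1-q)}{1-p}+q,$$ and when $p=1$ the second term of $p_k$ is interpreted as $0$.
   Context: Two-type Community Modulated Recursive Tree (CMRT) with parameters $p\in(0,1]$, $q\in[0,1]$: $\mathcal{T}_2$ consists of vertex $1$ of type $A$ and vertex $2$ of type $B$ joined by an edge (the roots of type $A$ and $B$). For $n\ge 3$, $\mathcal{T}_n$ is obtained from $\mathcal{T}_{n-1}$ by adding vertex $n$: (1) vertex $n$ is of type $A$ with probability $p$ and of type $B$ with probability $1-p$; (2) with probability $q$ it decides to connect to a vertex of its own type, and with probability $1-q$ to a vertex of the other type; (3) it connects by an edge to an existing vertex of the selected type chosen uniformly at random. All random choices are independent. Edges are viewed as directed from parent (the earlier vertex) to child; the out-degree of a vertex is its number of children. *)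

(* Defs.v *)
From HB Require Import structures.
From mathcomp Require Import all_boot all_order all_algebra.
From mathcomp Require Import reals.
Set Implicit Arguments. Unset Strict Implicit. Unset Printing Implicit Defensive.
Import Order.TTheory GRing.Theory Num.Theory.
Local Open Scope ring_scope.

(* A tree T_n is encoded by a sequence s of length n: entry i (0-indexed)
   describes vertex i+1 as (type_is_A, parent).  Vertex 1 = (true, 0)
   (root of type A, no parent), vertex 2 = (false, 1) (root of type B,
   joined to vertex 1, its parent since it is earlier). *)
Definition tree := seq (bool * nat).

Definition T2 : tree := [:: (true, 0%N); (false, 1%N)].

(* type of vertex j (1-indexed): true = A, false = B *)
Definition vtype (s : tree) (j : nat) : bool := (nth (true, 0%N) s j.-1).1.

Definition ntype (s : tree) (t : bool) : nat := count (fun e => e.1 == t) s.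

Section CMRT.
Variables (R : realType) (p q : R).

(* probability that the new vertex gets type t and attaches to existing
   vertex j (1 <= j <= size s): type choice, then own/other-type decision
   (which must select j's type), then uniform choice within that type. *)
Definition step_prob (s : tree) (t : bool) (j : nat) : R :=
  (if t then p else 1 - p) *
  (if vtype s j == t then q else 1 - q) / (ntype s (vtype s j))%:R.

(* Law of the tree after m growth steps (i.e. of T_(m+2)) as a finite
   weighted list of outcomes (histories are all distinct). *)
Fixpoint cmrt_dist (m : nat) : seq (tree * R) :=
  match m with
  | 0 => [:: (T2, 1)]
  | m'.+1 =>
      flatten [seq [seq (rcons x.1 (t, j), x.2 * step_prob x.1 t j)
                   | t <- [:: true; false], j <- iota 1 (size x.1)]
              | x <- cmrt_dist m']
  end.

Definition probT (n : nat) (E : tree -> bool) : R :=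
  \sum_(x <- cmrt_dist (n - 2)) x.2 * (E x.1)%:R.

End CMRT.

Definition outdeg (s : tree) (v : nat) : nat := count (fun e => e.2 == v) s.

Definition Nk (k : nat) (s : tree) : nat :=
  count (fun v => outdeg s v == k) (iota 1 (size s)).

Definition rA {R : realType} (p q : R) : R := q + (1 - p) * (1 - q) / p.
Definition rB {R : realType} (p q : R) : R := p * (1 - q) / (1 - p) + q.

Definition pk {R : realType} (p q : R) (k : nat) : R :=
  p / (1 + rA p q) * (rA p q / (1 + rA p q)) ^+ k +
  (if p == 1 then 0
   else (1 - p) / (1 + rB p q) * (rB p q / (1 + rB p q)) ^+ k).

(* Main.v *)
Require Import Defs.
From HB Require Import structures.
From mathcomp Require Import all_boot all_order all_algebra.
From mathcomp Require Import reals ring lra zify.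
From Stdlib Require Import Lia.
Import Order.TTheory GRing.Theory Num.Theory.
Local Open Scope ring_scope.

Section Aux.
Variables (R : realType) (p q : R).
Hypotheses (hp0 : 0 < p) (hp1 : p <= 1) (hq0 : 0 <= q) (hq1 : q <= 1).
Ltac hyps := have := hp0; have := hp1; have := hq0; have := hq1; move=> ? ? ? ?.

Definition E (m : nat) (g : tree -> R) : R :=
  \sum_(x <- cmrt_dist p q m) x.2 * g x.1.

Definition Step (s : tree) (g : tree -> R) : R :=
  \sum_(t <- [:: true; false]) \sum_(j <- iota 1 (size s))
     step_prob p q s t j * g (rcons s (t, j)).

Definition good (s : tree) : bool :=
  [&& (0 < ntype s true)%N, (0 < ntype s false)%N &
      all (fun e => (e.2 <= size s)%N) s].

Definition pi (t : bool) : R := if t then p else 1 - p.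
Definition wt (tau t : bool) : R := if tau == t then q else 1 - q.
Definition NT (s : tree) (tau : bool) : R := (ntype s tau)%:R.
Definition ST (s : tree) (tau : bool) (F : nat -> R) : R :=
  \sum_(j <- iota 1 (size s)) (vtype s j == tau)%:R * F j.
Definition alpha (tau : bool) : R := pi true * wt tau true + pi false * wt tau false.

Lemma E_succ m g : E m.+1 g = E m (fun s => Step s g).
Proof.
rewrite /E /= big_flatten big_map; apply: eq_bigr => x _.
rewrite !big_cat !big_map big_nil /Step !big_cons big_nil !addr0 mulrDr.
rewrite !mulr_sumr; congr (_ + _); last rewrite [in LHS]Monoid.mulm1; by elim: (iota _ _) => [|a l IH]; rewrite ?big_nil ?big_cons /= ?IH ?mulrA.
Qed.

Lemma pi_ge0 t : 0 <= pi t.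
Proof. rewrite /pi; case: t => /=; hyps; lra. Qed.
Lemma wt_ge0 tau t : 0 <= wt tau t.
Proof. by rewrite /wt; case: (tau == t); hyps; lra. Qed.

Lemma step_probE s t j :
  step_prob p q s t j = pi t * (wt (vtype s j) t / NT s (vtype s j)).
Proof. by rewrite /step_prob mulrA. Qed.

Lemma step_prob_ge0 s t j : 0 <= step_prob p q s t j.
Proof.
rewrite step_probE; apply: mulr_ge0; first exact: pi_ge0.
apply: divr_ge0; [exact: wt_ge0 | exact: ler0n].
Qed.

Lemma ntype_rcons s e tau : ntype (rcons s e) tau = (ntype s tau + (e.1 == tau))%N.
Proof. by rewrite /ntype -cats1 count_cat /= addn0. Qed.

Lemma good_rcons s t j : good s -> (j <= size s)%N -> good (rcons s (t, j)).
Proof.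
case/and3P => h1 h2 h3 hj; apply/and3P; split.
- by rewrite ntype_rcons ltn_addr.
- by rewrite ntype_rcons ltn_addr.
rewrite all_rcons size_rcons /= (leq_trans hj) //.
apply: sub_all h3 => e /= h; exact: leqW.
Qed.

Lemma dist_inv m x : x \in cmrt_dist p q m ->
  [/\ 0 <= x.2, good x.1 & size x.1 = m.+2].
Proof.
elim: m x => [|m IH] x /=.
  by rewrite inE => /eqP -> /=; split => //; lra.
case/flattenP => l /mapP [y hy ->].
have [h1 h2 h3] := IH y hy.
have key : forall t j, j \in iota 1 (size y.1) ->
  [/\ 0 <= y.2 * step_prob p q y.1 t j, good (rcons y.1 (t, j))
     & size (rcons y.1 (t, j)) = m.+3].
  move=> t j hj; split.
  - apply: mulr_ge0 => //; exact: step_prob_ge0.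
  - apply: good_rcons => //; move: hj; rewrite mem_iota => /andP [_]; rewrite add1n ltnS; exact.
  - by rewrite size_rcons h3.
by rewrite !mem_cat in_nil orbF => /orP [] /mapP [j hj ->] /=; apply: key.
Qed.

Lemma E_le m f g : (forall s, good s -> size s = m.+2 -> f s <= g s) ->
  E m f <= E m g.
Proof.
move=> H; rewrite /E !big_seq; apply: ler_sum => x hx.
have [h1 h2 h3] := @dist_inv m x hx.
by apply: ler_wpM2l => //; apply: H.
Qed.

Lemma E_ext m f g : (forall s, f s = g s) -> E m f = E m g.
Proof. by move=> H; apply: eq_bigr => x _; rewrite H. Qed.

Lemma E_add m f g : E m (fun s => f s + g s) = E m f + E m g.
Proof. by rewrite /E -big_split; apply: eq_bigr => x _; rewrite mulrDr. Qed.

Lemma E_scal m c f : E m (fun s => c * f s) = c * E m f.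
Proof. by rewrite /E mulr_sumr; apply: eq_bigr => x _; rewrite mulrCA. Qed.

Lemma Step_add s f g : Step s (fun s' => f s' + g s') = Step s f + Step s g.
Proof.
rewrite /Step -big_split; apply: eq_bigr => t _.
by rewrite -big_split; apply: eq_bigr => j _; rewrite mulrDr.
Qed.

Lemma Step_scal s c f : Step s (fun s' => c * f s') = c * Step s f.
Proof.
rewrite /Step mulr_sumr; apply: eq_bigr => t _.
by rewrite mulr_sumr; apply: eq_bigr => j _; rewrite mulrCA.
Qed.

Lemma Step_le s f g :
  (forall t j, j \in iota 1 (size s) -> f (rcons s (t, j)) <= g (rcons s (t, j))) ->
  Step s f <= Step s g.
Proof.
move=> H; rewrite /Step; apply: ler_sum => t _.
rewrite !big_seq; apply: ler_sum => j hj.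
by apply: ler_wpM2l; [exact: step_prob_ge0 | exact: H].
Qed.


Lemma natr_count (T : Type) (P : pred T) (s : seq T) :
  (count P s)%:R = \sum_(x <- s) (P x)%:R :> R.
Proof.
elim: s => [|x s IH]; first by rewrite big_nil.
by rewrite big_cons /= natrD IH.
Qed.

Lemma sum_iota1 (F : nat -> R) n :
  \sum_(j <- iota 1 n) F j = \sum_(i <- iota 0 n) F i.+1.
Proof.
have -> : iota 1 n = map (addn 1) (iota 0 n) by rewrite -iotaDl.
by rewrite big_map.
Qed.

Lemma ST_one s tau : ST s tau (fun _ => 1) = NT s tau.
Proof.
rewrite /ST /NT /ntype natr_count -[in RHS](mkseq_nth (true, 0%N) s) /mkseq.
rewrite big_map sum_iota1; apply: eq_bigr => i _.
by rewrite mulr1 /vtype.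
Qed.

Lemma sum_step s t (F : nat -> R) :
  \sum_(j <- iota 1 (size s)) step_prob p q s t j * F j =
  pi t * (wt true t / NT s true * ST s true F + wt false t / NT s false * ST s false F).
Proof.
rewrite /ST !mulr_sumr -big_split mulr_sumr; apply: eq_bigr => j _.
rewrite step_probE; case: (vtype s j) => /=; ring.
Qed.

Lemma NT_gt0 s tau : good s -> 0 < NT s tau.
Proof. by case/and3P => h1 h2 _; rewrite /NT ltr0n; case: tau. Qed.

Lemma mass s t : good s -> \sum_(j <- iota 1 (size s)) step_prob p q s t j = pi t.
Proof.
move=> g.
have -> : \sum_(j <- iota 1 (size s)) step_prob p q s t j =
          \sum_(j <- iota 1 (size s)) step_prob p q s t j * (fun _ => 1) j.
  by apply: eq_bigr => j _; rewrite mulr1.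
rewrite sum_step !ST_one !divfK ?gt_eqF ?NT_gt0 //.
by rewrite /wt; case: t => /=; ring.
Qed.

Lemma Step_gen s g A (a : bool -> R) (H : nat -> R) : good s ->
  (forall t j, j \in iota 1 (size s) -> g (rcons s (t, j)) = A + a t + H j) ->
  Step s g = A + (pi true * a true + pi false * a false) +
    (alpha true / NT s true * ST s true H + alpha false / NT s false * ST s false H).
Proof.
move=> gs Hg.
have E1 : forall t, \sum_(j <- iota 1 (size s)) step_prob p q s t j * g (rcons s (t, j))
   = pi t * (A + a t) + pi t * (wt true t / NT s true * ST s true H + wt false t / NT s false * ST s false H).
  move=> t; rewrite -sum_step -(mass s t gs) mulr_suml -big_split /=.
  rewrite big_seq [in RHS]big_seq; apply: eq_bigr => j hj.
  by rewrite Hg // mulrDr.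
rewrite /Step !big_cons big_nil addr0 !E1 /alpha.
rewrite /wt /=; ring.
Qed.

Lemma Step_const s c : good s -> Step s (fun _ => c) = c.
Proof.
move=> gs; rewrite (@Step_gen s _ c (fun _ => 0) (fun _ => 0)) //.
  by rewrite /ST !big1 => [| j _ | j _]; rewrite ?mulr0; ring.
by move=> t j _; rewrite !addr0.
Qed.

Lemma Step_sq s g B : good s ->
  (forall t j, j \in iota 1 (size s) -> `|g (rcons s (t, j)) - g s| <= B) ->
  Step s (fun s' => g s' ^+ 2) <= g s ^+ 2 + 2 * g s * (Step s g - g s) + B ^+ 2.
Proof.
move=> gs Hb.
apply: le_trans (_ : Step s (fun s' => (g s ^+ 2 + B ^+ 2 - 2 * g s * g s)
                                       + 2 * g s * g s') <= _).
  apply: Step_le => t j hj.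
  have := Hb t j hj; rewrite ler_norml => /andP [h1 h2].
  set x := g (rcons s (t, j)) in h1 h2 *; set y := g s in h1 h2 *.
  nra.
rewrite Step_add Step_const // Step_scal; lra.
Qed.


Lemma bool01 (b : bool) : 0 <= (b%:R : R) <= 1.
Proof. by case: b => /=; rewrite ?ler01 ?lexx. Qed.

Lemma vtype_rcons s e v : (0 < v <= size s)%N -> vtype (rcons s e) v = vtype s v.
Proof.
move=> /andP [h1 h2]; rewrite /vtype nth_rcons.
by have -> : (v.-1 < size s)%N by lia.
Qed.

Lemma vtype_last s e : vtype (rcons s e) (size s).+1 = e.1.
Proof. by rewrite /vtype /= nth_rcons ltnn eqxx. Qed.

Lemma outdeg_rcons s t j v : outdeg (rcons s (t, j)) v = (outdeg s v + (j == v))%N.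
Proof. by rewrite /outdeg -cats1 count_cat /= addn0. Qed.

Lemma outdeg_new s : all (fun e => (e.2 <= size s)%N) s -> outdeg s (size s).+1 = 0%N.
Proof.
move=> h; apply/eqP; rewrite -leqn0 leqNgt -has_count; apply/hasPn => e /(allP h) /= he.
by apply/negP => /eqP E; rewrite E ltnn in he.
Qed.

Definition X s tau d := ST s tau (fun v => (outdeg s v == d)%:R).
Definition Xp s tau d := ST s tau (fun v => ((outdeg s v).+1 == d)%:R).

Lemma X_rcons s t j tau d : good s -> j \in iota 1 (size s) ->
  X (rcons s (t, j)) tau d = X s tau d + ((t == tau) && (d == 0%N))%:R +
   (vtype s j == tau)%:R * (((outdeg s j).+1 == d)%:R - (outdeg s j == d)%:R).
Proof.
move=> gs hj; have /and3P [_ _ ga] := gs.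
have hj' : (0 < j <= size s)%N by move: hj; rewrite mem_iota; lia.
rewrite /X /ST size_rcons.
rewrite (_ : iota 1 (size s).+1 = iota 1 (size s) ++ [:: (size s).+1]);
  last by rewrite -[in LHS](addn1 (size s)) iotaD add1n.
rewrite big_cat big_seq1 /= vtype_last outdeg_rcons.
rewrite outdeg_new //.
have -> : (j == (size s).+1) = false by apply/negP => /eqP E; move: hj'; rewrite E; lia.
have -> : \sum_(v <- iota 1 (size s)) (vtype (rcons s (t, j)) v == tau)%:R *
            (outdeg (rcons s (t, j)) v == d)%:R =
          \sum_(v <- iota 1 (size s)) (vtype s v == tau)%:R * ((outdeg s v + (j == v))%N == d)%:R :> R.
  rewrite big_seq [RHS]big_seq; apply: eq_bigr => v hv.
  rewrite vtype_rcons ?outdeg_rcons //; move: hv; rewrite mem_iota; lia.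
rewrite (bigD1_seq j) ?iota_uniq //= [in RHS](bigD1_seq j) ?iota_uniq //=.
have -> : \sum_(i <- iota 1 (size s) | i != j)
            (vtype s i == tau)%:R * ((outdeg s i + (j == i))%N == d)%:R =
          \sum_(i <- iota 1 (size s) | i != j) (vtype s i == tau)%:R * (outdeg s i == d)%:R :> R.
  by apply: eq_bigr => i hi; rewrite (eq_sym j i) (negbTE hi) addn0.
rewrite eqxx addn1 addn0.
have -> : (0%N == d) = (d == 0%N) by rewrite eq_sym.
case: (t == tau); case: (d == 0%N) => /=; ring.
Qed.

Lemma NT_rcons s t j tau : NT (rcons s (t, j)) tau = NT s tau + (t == tau)%:R.
Proof. by rewrite /NT ntype_rcons natrD. Qed.

Definition r (tau : bool) : R := if tau then rA p q else rB p q.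
Definition c (tau : bool) (d : nat) : R := 1 / (1 + r tau) * (r tau / (1 + r tau)) ^+ d.
Definition cp (tau : bool) (d : nat) : R := if d is d'.+1 then c tau d' else 0.

Lemma r_ge0 tau : 0 <= r tau.
Proof.
hyps; rewrite /r /rA /rB; case: tau.
  apply: addr_ge0 => //; apply: divr_ge0; last lra; apply: mulr_ge0; lra.
apply: addr_ge0 => //; apply: divr_ge0; [apply: mulr_ge0| ]; lra.
Qed.

Lemma c_bounds tau d : 0 <= c tau d <= 1.
Proof.
have hr := r_ge0 tau.
have h1 : 0 < 1 + r tau by lra.
have ha : 0 <= 1 / (1 + r tau) <= 1.
  by apply/andP; split; [apply: divr_ge0; lra | rewrite ler_pdivrMr // mul1r; lra].
have hb : 0 <= r tau / (1 + r tau) <= 1.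
  by apply/andP; split; [apply: divr_ge0; lra | rewrite ler_pdivrMr // mul1r; lra].
case/andP: hb => hb1 hb2; have hx := exprn_ile1 d hb1 hb2.
have hx0 : 0 <= (r tau / (1 + r tau)) ^+ d by apply: exprn_ge0.
rewrite /c; move: hx hx0 ha; set u := _ ^+ d; set v := 1 / _ => ? ? /andP [? ?].
apply/andP; split; nra.
Qed.

Lemma cp_bounds tau d : 0 <= cp tau d <= 1.
Proof. case: d => [|d] /=; [by rewrite lexx ler01 | exact: c_bounds]. Qed.

Lemma c_rec tau d : c tau d * (1 + r tau) = (d == 0%N)%:R + r tau * cp tau d.
Proof.
have hr := r_ge0 tau.
have h1 : 1 + r tau != 0 by apply/negP => /eqP; lra.
by case: d => [|d] /=; rewrite /c ?exprS; field.
Qed.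

Lemma alpha_r tau : pi tau != 0 -> alpha tau = r tau * pi tau.
Proof.
rewrite /alpha /r /rA /rB /pi /wt; case: tau => /= h; field => //.
Qed.

Lemma alpha_bounds tau : 0 <= alpha tau <= 1.
Proof. hyps; rewrite /alpha /pi /wt; case: tau => /=; apply/andP; split; nra. Qed.

Lemma ST_bounds s tau F : (forall j, 0 <= F j <= 1) -> 0 <= ST s tau F <= NT s tau.
Proof.
move=> HF; rewrite -ST_one; apply/andP; split; rewrite /ST.
  apply: sumr_ge0 => j _; have := HF j; have := bool01 (vtype s j == tau); nra.
apply: ler_sum => j _; have := HF j; have := bool01 (vtype s j == tau); nra.
Qed.

Definition D s tau d := X s tau d - c tau d * NT s tau.
Definition Dp s tau d := Xp s tau d - cp tau d * NT s tau.

Lemma D_abs s tau d : `|D s tau d| <= NT s tau.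
Proof.
have := @ST_bounds s tau (fun v => (outdeg s v == d)%:R) (fun j => bool01 _).
have := c_bounds tau d; rewrite /D /X ler_norml.
set x := ST _ _ _; set y := c _ _; set N := NT _ _ => /andP [? ?] /andP [? ?].
apply/andP; split; nra.
Qed.

Lemma Dp_abs s tau d : `|Dp s tau d| <= NT s tau.
Proof.
have := @ST_bounds s tau (fun v => ((outdeg s v).+1 == d)%:R) (fun j => bool01 _).
have := cp_bounds tau d; rewrite /Dp /Xp ler_norml.
set x := ST _ _ _; set y := cp _ _; set N := NT _ _ => /andP [? ?] /andP [? ?].
apply/andP; split; nra.
Qed.

Lemma D_rcons s t j tau d : good s -> j \in iota 1 (size s) ->
  D (rcons s (t, j)) tau d = D s tau d +
    (((t == tau) && (d == 0%N))%:R - c tau d * (t == tau)%:R) +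
    (vtype s j == tau)%:R * (((outdeg s j).+1 == d)%:R - (outdeg s j == d)%:R).
Proof. by move=> gs hj; rewrite /D X_rcons // NT_rcons; ring. Qed.

Lemma ST_tau s tau tau' (K : nat -> R) :
  ST s tau' (fun j => (vtype s j == tau)%:R * K j) = (tau' == tau)%:R * ST s tau K.
Proof.
rewrite /ST mulr_sumr; apply: eq_bigr => j _.
by case: (vtype s j); case: tau; case: tau' => /=; ring.
Qed.

Lemma Xp_X s tau d :
  ST s tau (fun j => ((outdeg s j).+1 == d)%:R - (outdeg s j == d)%:R) = Xp s tau d - X s tau d.
Proof. by rewrite /Xp /X /ST -sumrB; apply: eq_bigr => j _; ring. Qed.


Lemma NT_neq0 s tau : good s -> NT s tau != 0.
Proof. by move=> gs; apply/negP => /eqP E; have := NT_gt0 s tau gs; rewrite E ltxx. Qed.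

Lemma Step_D s tau d : good s -> pi tau != 0 ->
  Step s (fun s' => D s' tau d) = D s tau d + alpha tau / NT s tau * (Dp s tau d - D s tau d).
Proof.
move=> gs hpi.
rewrite (@Step_gen s _ (D s tau d)
   (fun t => ((t == tau) && (d == 0%N))%:R - c tau d * (t == tau)%:R)
   (fun j => (vtype s j == tau)%:R * (((outdeg s j).+1 == d)%:R - (outdeg s j == d)%:R))) //;
  last by move=> t j hj; rewrite D_rcons.
rewrite !ST_tau Xp_X.
have -> : pi true * (((true == tau) && (d == 0%N))%:R - c tau d * (true == tau)%:R) +
          pi false * (((false == tau) && (d == 0%N))%:R - c tau d * (false == tau)%:R) =
          pi tau * ((d == 0%N)%:R - c tau d) by clear hpi; case: tau => /=; ring.
have -> : alpha true / NT s true * ((true == tau)%:R * (Xp s tau d - X s tau d)) +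
          alpha false / NT s false * ((false == tau)%:R * (Xp s tau d - X s tau d)) =
          alpha tau / NT s tau * (Xp s tau d - X s tau d) by clear hpi; case: tau => /=; ring.
have hN := NT_neq0 s tau gs.
have K : pi tau * ((d == 0%N)%:R - c tau d) + alpha tau * (cp tau d - c tau d) = 0.
  rewrite alpha_r //.
  have -> : pi tau * ((d == 0%N)%:R - c tau d) + r tau * pi tau * (cp tau d - c tau d) =
            pi tau * (((d == 0%N)%:R + r tau * cp tau d) - c tau d * (1 + r tau)) by ring.
  by rewrite c_rec subrr mulr0.
rewrite /Dp /D.
have -> : alpha tau / NT s tau * (Xp s tau d - cp tau d * NT s tau - (X s tau d - c tau d * NT s tau))
   = alpha tau / NT s tau * (Xp s tau d - X s tau d) + alpha tau * (c tau d - cp tau d) by field.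
move: K; set u := pi tau * _; set v := alpha tau * _; set w := alpha tau * (_ - _) => K.
have -> : w = - v by rewrite /w /v; ring.
lra.
Qed.

Lemma Step_D2 s tau d : good s -> pi tau != 0 ->
  Step s (fun s' => D s' tau d ^+ 2) <= D s tau d ^+ 2 + `|Dp s tau d| + 4.
Proof.
move=> gs hpi.
apply: le_trans (@Step_sq s (fun s' => D s' tau d) 2 gs _) _.
  move=> t j hj; rewrite D_rcons //.
  move: (c_bounds tau d) (bool01 ((t == tau) && (d == 0%N))) (bool01 (t == tau))
    (bool01 (vtype s j == tau)) (bool01 ((outdeg s j).+1 == d)) (bool01 (outdeg s j == d)).
  move: (c tau d) (((t == tau) && (d == 0%N))%:R) ((t == tau)%:R) ((vtype s j == tau)%:R)
    (((outdeg s j).+1 == d)%:R) ((outdeg s j == d)%:R) (D s tau d)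
    => c0 a1 a2 a3 a4 a5 y /andP[? ?] /andP[? ?] /andP[? ?] /andP[? ?] /andP[? ?] /andP[? ?].
  rewrite ler_norml; apply/andP; split; nra.
rewrite Step_D //.
have hN := NT_gt0 s tau gs; have hA := alpha_bounds tau; have hDp := Dp_abs s tau d.
have hsq : `|Dp s tau d| ^+ 2 = Dp s tau d ^+ 2 by rewrite real_normK // num_real.
have hu0 : 0 <= `|Dp s tau d| by [].
move: hsq hDp hN hA hu0.
move: (Dp s tau d) (D s tau d) (NT s tau) (alpha tau) => y x N a hsq hu hN /andP [ha0 ha1] hu0.
have key : a / N * (2 * x * (y - x)) <= `|y|.
  rewrite mulrAC ler_pdivrMr //.
  have h1 : 2 * x * (y - x) <= y ^+ 2 / 2 by have := sqr_ge0 (y - 2 * x); nra.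
  have h2 : a * (2 * x * (y - x)) <= a * (y ^+ 2 / 2) by apply: ler_wpM2l.
  have h4 : a * (y ^+ 2 / 2) <= y ^+ 2 / 2 by have := sqr_ge0 y; nra.
  have h5 : `|y| ^+ 2 <= `|y| * N by rewrite expr2; apply: ler_wpM2l.
  have h6 : 0 <= `|y| * N by apply: mulr_ge0 => //; exact: ltW.
  rewrite -hsq in h2 h4; move: h2 h4 h5 h6; set u := `|y|; lra.
have -> : x ^+ 2 + 2 * x * (x + a / N * (y - x) - x) + 2 ^+ 2 =
          x ^+ 2 + a / N * (2 * x * (y - x)) + 4 by ring.
lra.
Qed.

Lemma E_eq m f g : (forall s, good s -> size s = m.+2 -> f s = g s) -> E m f = E m g.
Proof.
by move=> H; apply/le_anti/andP; split; apply: E_le => s gs hs; rewrite H.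
Qed.

Lemma E_const m c0 : E m (fun _ => c0) = c0.
Proof.
elim: m => [|m IH]; first by rewrite /E /= big_cons big_nil mul1r addr0.
by rewrite E_succ -[RHS]IH; apply: E_eq => s gs _; rewrite Step_const.
Qed.

Lemma E_D2 m tau d : pi tau != 0 ->
  E m.+1 (fun s => D s tau d ^+ 2) <=
  E m (fun s => D s tau d ^+ 2) + E m (fun s => `|Dp s tau d|) + 4.
Proof.
move=> hpi; rewrite E_succ.
apply: le_trans (@E_le m _ (fun s => D s tau d ^+ 2 + `|Dp s tau d| + 4) _) _.
  by move=> s gs _; apply: Step_D2.
by rewrite !E_add E_const.
Qed.

Lemma amgm (y k : R) : 0 < k -> `|y| <= 1 / k * y ^+ 2 + k / 4.
Proof.
move=> hk.
have hsq : y ^+ 2 = `|y| ^+ 2 by rewrite real_normK // num_real.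
rewrite hsq; move: (`|y|) => u.
have -> : 1 / k * u ^+ 2 + k / 4 = u + (u - k / 2) ^+ 2 / k.
  by field; apply/negP => /eqP E; move: hk; rewrite E ltxx.
by rewrite lerDl; apply: divr_ge0; [exact: sqr_ge0 | exact: ltW].
Qed.

Definition Q (f : nat -> R) := forall eps, 0 < eps ->
  exists C, forall m, f m <= eps * (m.+2)%:R ^+ 2 + C * (m.+2)%:R.

Lemma natr3 m : (m.+3)%:R = (m.+2)%:R + 1 :> R.
Proof. by rewrite [in LHS]mulrS addrC. Qed.

Lemma D_T2 tau d : D T2 tau d ^+ 2 <= 1.
Proof.
have E1 : NT T2 tau = 1 by rewrite /NT; case: tau.
have h := D_abs T2 tau d.
rewrite E1 in h.
have hsq : D T2 tau d ^+ 2 = `|D T2 tau d| ^+ 2 by rewrite real_normK // num_real.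
rewrite hsq; have := normr_ge0 (D T2 tau d); move: (`|_|) h => u; nra.
Qed.

Lemma Q_step tau d : pi tau != 0 ->
  Q (fun m => E m (fun s => Dp s tau d ^+ 2)) -> Q (fun m => E m (fun s => D s tau d ^+ 2)).
Proof.
move=> hpi HQ eps he.
have he2 : 0 < eps ^+ 2 by exact: exprn_gt0.
have [C' HC'] := HQ _ he2.
have hC0 : 0 <= `|C'| / (2 * eps) by apply: divr_ge0 => //; lra.
exists (`|C'| / (2 * eps) + 6).
elim => [|m IH].
  rewrite /E /= big_cons big_nil mul1r addr0.
  have := D_T2 tau d; have : 0 <= eps * 2%:R ^+ 2 by apply: mulr_ge0; [lra| exact: sqr_ge0].
  move: (`|C'| / (2 * eps)) hC0 => C hC; nra.
pose x : R := (m.+2)%:R.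
have hx : 0 < x by rewrite /x ltr0n.
have hk : 0 < 2 * eps * x by apply: mulr_gt0 => //; lra.
have hAM : E m (fun s => `|Dp s tau d|) <=
           1 / (2 * eps * x) * E m (fun s => Dp s tau d ^+ 2) + 2 * eps * x / 4.
  apply: le_trans (@E_le m _ (fun s => 1 / (2 * eps * x) * Dp s tau d ^+ 2 + 2 * eps * x / 4) _) _.
    by move=> s _ _; apply: amgm.
  by rewrite E_add E_scal E_const.
have h2 : 1 / (2 * eps * x) * E m (fun s => Dp s tau d ^+ 2) <=
          1 / (2 * eps * x) * (eps ^+ 2 * x ^+ 2 + C' * x).
  by apply: ler_wpM2l; [apply: divr_ge0; [lra | exact: ltW] | exact: HC'].
have E2 : 1 / (2 * eps * x) * (eps ^+ 2 * x ^+ 2 + C' * x) = eps * x / 2 + C' / (2 * eps).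
  field; rewrite gt_eqF // (_ : 2 + m%:R = x) ?gt_eqF // /x -[m.+2]addn2 natrD addrC //.
rewrite E2 in h2.
have h3 : C' / (2 * eps) <= `|C'| / (2 * eps).
  by apply: ler_wpM2r; [rewrite invr_ge0; lra | exact: ler_norm].
have h1 := E_D2 m tau d hpi.
have hIH := IH; rewrite -/x in hIH.
rewrite natr3 -/x.
have hex : 0 <= eps * x by apply: mulr_ge0; lra.
move: (`|C'| / (2 * eps)) hC0 h3 hIH => C hC h3 hIH.
move: hIH h1 hAM h2; set e1 := E m.+1 _; set e2 := E m _; set e3 := E m (fun s => `|_|);
  set e4 := E m (fun s => Dp s tau d ^+ 2) => hIH h1 hAM h2.
clearbody x e1 e2 e3 e4; move: (1 / (2 * eps * x) * e4) (C' / (2 * eps)) hAM h2 h3 => t4 c' hAM h2 h3.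
have he0 : 0 <= eps by lra.
have H1 : e1 <= eps * x ^+ 2 + (C + 6) * x + eps * x + c' + 4 by lra.
have H2 : eps * x + c' + 4 <= 2 * (eps * x) + eps + (C + 6) by lra.
have -> : eps * (x + 1) ^+ 2 + (C + 6) * (x + 1) = eps * x ^+ 2 + (C + 6) * x + (2 * (eps * x) + eps + (C + 6)) by ring.
lra.
Qed.


Lemma QD tau d : pi tau != 0 -> Q (fun m => E m (fun s => D s tau d ^+ 2)).
Proof.
move=> hpi; elim: d => [|d IH]; apply: Q_step => //.
move=> eps he; exists 0 => m.
rewrite (@E_ext m _ (fun _ => 0)) ?E_const.
  have : 0 <= eps * (m.+2)%:R ^+ 2 by apply: mulr_ge0; [lra | exact: sqr_ge0].
  lra.
move=> s; rewrite /Dp /= mul0r subr0 /Xp /ST big1 ?expr0n // => j _ /=; exact: mulr0.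
Qed.

Definition G s := NT s true - p * (size s)%:R.

Lemma G_rcons s t j : G (rcons s (t, j)) = G s + ((t == true)%:R - p).
Proof. rewrite /G NT_rcons size_rcons -[(size s).+1]addn1 natrD; ring. Qed.

Lemma ST0 s tau : ST s tau (fun _ => 0) = 0.
Proof. by rewrite /ST big1 // => j _; rewrite mulr0. Qed.

Lemma Step_G s : good s -> Step s G = G s.
Proof.
move=> gs.
rewrite (@Step_gen s G (G s) (fun t => (t == true)%:R - p) (fun _ => 0)) //;
  last by move=> t j _; rewrite G_rcons addr0.
rewrite !ST0 /pi /=; ring.
Qed.

Lemma Step_G2 s : good s -> Step s (fun s' => G s' ^+ 2) <= G s ^+ 2 + 1.
Proof.
move=> gs; apply: le_trans (@Step_sq s G 1 gs _) _.
  move=> t j _; rewrite G_rcons.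
  have -> : G s + ((t == true)%:R - p) - G s = (t == true)%:R - p by ring.
  have := bool01 (t == true); move: ((t == true)%:R) => b /andP [? ?].
  rewrite ler_norml; hyps; apply/andP; split; lra.
by rewrite Step_G // subrr mulr0 addr0 expr1n.
Qed.

Lemma E_G2 m : E m (fun s => G s ^+ 2) <= (m.+1)%:R.
Proof.
elim: m => [|m IH].
  rewrite /E /= big_cons big_nil mul1r addr0 /G /NT /=; hyps; nra.
rewrite E_succ; apply: le_trans (@E_le m _ (fun s => G s ^+ 2 + 1) _) _.
  by move=> s gs _; apply: Step_G2.
rewrite E_add E_const [(m.+2)%:R]mulrS addrC; lra.
Qed.

Lemma QG : Q (fun m => E m (fun s => G s ^+ 2)).
Proof.
move=> eps he; exists 1 => m; have := E_G2 m.
have : (m.+1)%:R <= (m.+2)%:R :> R by rewrite ler_nat.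
have : 0 <= eps * (m.+2)%:R ^+ 2 by apply: mulr_ge0; [lra | exact: sqr_ge0].
lra.
Qed.

Lemma NT_sum s : NT s true + NT s false = (size s)%:R.
Proof.
rewrite /NT /ntype -natrD -(count_predC (fun e : bool * nat => e.1 == true)).
congr (_ + _)%:R; apply: eq_count => e /=; by case: e => [[] n].
Qed.

Lemma QDf d : Q (fun m => E m (fun s => D s false d ^+ 2)).
Proof.
have [E1|hp] := eqVneq p 1; last first.
  apply: QD; rewrite /pi subr_eq0 eq_sym; exact: hp.
move=> eps he; have [C HC] := QG eps he; exists C => m; apply: le_trans (HC m).
apply: E_le => s gs _.
have hG : G s = - NT s false by rewrite /G E1 mul1r -NT_sum; ring.
have h := D_abs s false d.
have h0 := normr_ge0 (D s false d).
rewrite hG sqrrN -real_normK ?num_real //.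
rewrite expr2 [X in _ <= X]expr2; apply: ler_pM => //.
Qed.

Lemma Nk_X k s : (Nk k s)%:R = X s true k + X s false k.
Proof.
rewrite /Nk natr_count /X /ST -big_split; apply: eq_bigr => v _.
by case: (vtype s v) => /=; ring.
Qed.

Lemma pk_c k : pk p q k = p * c true k + (1 - p) * c false k.
Proof.
rewrite /pk /c /r; case: eqP => [E1|_].
  by rewrite E1 subrr !mul0r !addr0 !mul1r.
by rewrite !mul1r !mulrA.
Qed.


Lemma decomp k s n : size s = n ->
  (Nk k s)%:R - pk p q k * n%:R = D s true k + D s false k + (c true k - c false k) * G s.
Proof. by move=> hs; rewrite Nk_X pk_c /D /G -hs -NT_sum; ring. Qed.

Lemma sq3 (a b w g : R) : -1 <= w <= 1 ->
  (a + b + w * g) ^+ 2 <= 3 * (a ^+ 2 + b ^+ 2 + g ^+ 2).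
Proof.
move=> /andP [h1 h2].
have hw : (w * g) ^+ 2 <= g ^+ 2.
  rewrite exprMn; have := sqr_ge0 g; have : w ^+ 2 <= 1 by nra. nra.
have := sqr_ge0 (a - b); have := sqr_ge0 (a - w * g); have := sqr_ge0 (b - w * g).
move: hw; move: (w * g) => u; nra.
Qed.

Lemma ind_bound (Nv pkv nr eps : R) : 0 < eps -> 0 < nr ->
  (((eps < `|Nv / nr - pkv|)%R)%:R : R) <= 1 / (eps ^+ 2 * nr ^+ 2) * (Nv - pkv * nr) ^+ 2.
Proof.
move=> he hn.
have hA : 0 < eps ^+ 2 * nr ^+ 2 by apply: mulr_gt0; apply: exprn_gt0.
case: (boolP (eps < _)) => h /=; last first.
  by apply: mulr_ge0; [apply: divr_ge0 => //; exact: ltW | exact: sqr_ge0].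
have E1 : Nv / nr - pkv = (Nv - pkv * nr) / nr.
  by field; apply/negP => /eqP E; move: hn; rewrite E ltxx.
rewrite E1 normf_div (gtr0_norm hn) ltr_pdivlMr // in h.
rewrite div1r mulrC ler_pdivlMr // mul1r.
rewrite -[(Nv - pkv * nr) ^+ 2](real_normK (num_real _)) -exprMn.
have := normr_ge0 (Nv - pkv * nr); move: h; set u := `|Nv - pkv * nr| => h hu.
have : 0 <= eps * nr by apply: mulr_ge0; exact: ltW.
nra.
Qed.

Lemma main k eps delta : 0 < eps -> 0 < delta ->
  exists N : nat, forall n : nat, (N <= n)%N ->
    probT p q n (fun s => eps < `|(Nk k s)%:R / n%:R - pk p q k|) <= delta.
Proof.
move=> he hd.
pose e' := delta * eps ^+ 2 / 18.
have he2 : 0 < eps ^+ 2 by exact: exprn_gt0.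
have he' : 0 < e' by rewrite /e'; apply: divr_gt0; [exact: mulr_gt0 | rewrite ltr0n].
have hpt : pi true != 0 by rewrite /pi gt_eqF.
have [C1 H1] := QD true k hpt e' he'.
have [C2 H2] := QDf k e' he'.
have [C3 H3] := QG e' he'.
pose K := `|C1| + `|C2| + `|C3|.
have hK : 0 <= K by rewrite /K; apply: addr_ge0; [apply: addr_ge0|]; exact: normr_ge0.
pose B := 6 * K / (eps ^+ 2 * delta).
have hB : 0 <= B.
  by rewrite /B; apply: divr_ge0; [apply: mulr_ge0 => //; rewrite ler0n | apply: mulr_ge0; exact: ltW].
exists (maxn 2 (Num.Def.archi_bound B)).
move=> n; rewrite geq_max => /andP [hn2 hnB].
have hBn : B < n%:R by apply: lt_le_trans (archi_boundP hB) _; rewrite ler_nat.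
have hn0 : 0 < n%:R :> R by rewrite ltr0n; lia.
pose m := (n - 2)%N.
have hm : (m.+2 = n)%N by rewrite /m; lia.
have hm' : (m.+2)%:R = n%:R :> R by rewrite hm.
rewrite /probT -/m.
change (E m (fun s => (((eps < `|(Nk k s)%:R / n%:R - pk p q k|)%R)%:R)) <= delta).
apply: le_trans (@E_le m _ (fun s => 1 / (eps ^+ 2 * n%:R ^+ 2) *
                      ((Nk k s)%:R - pk p q k * n%:R) ^+ 2) _) _.
  by move=> s _ _; apply: ind_bound.
rewrite E_scal.
have hz : E m (fun s => ((Nk k s)%:R - pk p q k * n%:R) ^+ 2) <=
   E m (fun s => 3 * (D s true k ^+ 2 + D s false k ^+ 2 + G s ^+ 2)).
  apply: E_le => s gs hs; rewrite (@decomp k s n); last by rewrite hs.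
  apply: sq3; have := c_bounds true k; have := c_bounds false k.
  move=> /andP [? ?] /andP [? ?]; apply/andP; split; lra.
rewrite E_scal !E_add in hz.
have h1 := H1 m; have h2 := H2 m; have h3 := H3 m.
rewrite hm' in h1 h2 h3.
move: hz h1 h2 h3.
set z := E m _; set f1 := E m _; set f2 := E m _; set f3 := E m _ => hz h1 h2 h3.
clearbody z f1 f2 f3.
move: hBn hn0 hK h1 h2 h3; move: (n%:R) => x hBn hn0 hK h1 h2 h3.
have hS : C1 + C2 + C3 <= K.
  by rewrite /K; have := ler_norm C1; have := ler_norm C2; have := ler_norm C3; lra.
have hz2 : z <= 3 * (3 * e' * x ^+ 2 + (C1 + C2 + C3) * x) by lra.
have hA : 0 <= 1 / (eps ^+ 2 * x ^+ 2).
  by apply: divr_ge0 => //; apply: mulr_ge0; [exact: ltW | exact: sqr_ge0].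
apply: le_trans (ler_wpM2l hA hz2) _.
have hx0 : x != 0 by rewrite gt_eqF.
have he0 : eps != 0 by rewrite gt_eqF.
have -> : 1 / (eps ^+ 2 * x ^+ 2) * (3 * (3 * e' * x ^+ 2 + (C1 + C2 + C3) * x)) =
          delta / 2 + 3 * (C1 + C2 + C3) / (eps ^+ 2 * x).
  by rewrite /e'; field; rewrite hx0 he0.
have hex : 0 < eps ^+ 2 * x by apply: mulr_gt0.
have key : 3 * (C1 + C2 + C3) / (eps ^+ 2 * x) <= delta / 2.
  rewrite ler_pdivrMr //.
  move: hBn; rewrite /B ltr_pdivrMr; last by apply: mulr_gt0.
  move: hS; move: (C1 + C2 + C3) => S hS hBn.
  have : 0 <= delta * (eps ^+ 2 * x) by apply: mulr_ge0; exact: ltW.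
  nra.
lra.
Qed.

End Aux.

Theorem theorem3p1 (R : realType) (p q : R) (k : nat) :
  0 < p -> p <= 1 -> 0 <= q -> q <= 1 ->
  forall eps : R, 0 < eps ->
  forall delta : R, 0 < delta ->
  exists N : nat, forall n : nat, (N <= n)%N ->
    probT p q n (fun s => eps < `|(Nk k s)%:R / n%:R - pk p q k|) <= delta.
Proof.
move=> hp0 hp1 hq0 hq1 eps he delta hd.
exact: (@main R p q hp0 hp1 hq0 hq1 k eps delta he hd).
Qed.
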